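(* Let $I$ be a set of players, for each $i\in I$ let $G_i$ be a compact convex subset of a Hausdorff locally convex topological vector space, and let $G=(G_i,P_i,Q_i)_{i\in I}$ be a general qualitative game satisfying property $T$, where $P_i,Q_i:\prod_{j\in I}G_j\to 2^{G_i}$ satisfy for each $i\in I$: (i) $y_i\in Q_i(y_i,x_{-i})$ for each $y_i\in G_i$ and each $x_{-i}\in G_{-i}$; (ii) $Q_i$ has convex closed values; (iii) $P_i(\cdot,x_{-i}):G_i\to 2^{G_i}$ is $L_S$-majorized on $G_i$ for each $x_{-i}\in G_{-i}$, where $S$ is the identity of $G_i$. Then: (a) if $G\to^* H$ and there exist $i\in I$ and $x_i,y_i\in G_i$ with $y_i\succ_H x_i$, then there exists $x_i^*\in H_i$ such that $x_i^*\succ_H x_i$ and $z_i\not\succ_H x_i^*$ for all $z_i\in G_i$; (b) if $M$ is a nonempty maximal $(\to^* )$-reduction of $G$, then $M$ is the unique maximal $(\to^* )$-reduction of $G$.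
   Context: $I$ is a nonempty set; $X=\prod_{j\in I}G_j$, $G_{-i}=\prod_{j\ne i}G_j$, $x=(x_i,x_{-i})$. A general qualitative game is $G=(G_i,P_i,Q_i)_{i\in I}$ with correspondences $P_i,Q_i:X\to 2^{G_i}$. It satisfies property $T$ if for each $i$ and each $x\in X$: $P_i(x)\subseteq Q_i(x)$, and $y_i\in P_i(x)$ implies $Q_i(y_i,x_{-i})\subseteq P_i(x)$. A pairing of $G$ is a family $H=(H_i)_{i\in I}$ with $H_i\subseteq G_i$ (the $P_i$ restricted to $\prod_jH_j$); $H_{-i}=\prod_{j\ne i}H_j$; $H$ is nonempty if every $H_i\neq\emptyset$. For $x_i,y_i\in G_i$: $y_i\succ_H x_i$ iff $H_{-i}\neq\emptyset$ and $y_i\in P_i(x_i,x_{-i})$ for all $x_{-i}\in H_{-i}$. For pairings $R,S$ with $S_i\subseteq R_i$ for all $i$: $R\to S$ means for every $i$ and $x_i\in R_i\setminus S_i$, $\bigcap_{x_{-i}\in R_{-i}}P_i(x_i,x_{-i})\ne\emptyset$; it is fast if moreover for every $i$ and $x_i\in R_i$, $\bigcap_{x_{-i}\in R_{-i}}P_i(x_i,x_{-i})\neq\emptyset$ implies $x_i\notin S_i$. $G\to^*H$ means there is a finite or countably infinite sequence of pairings $R^0=G,R^1,\dots$ with $R^t\to R^{t+1}$ fast for each $t$ and $H_i=\bigcap_tR^t_i$ for each $i$. $H$ is a maximal $(\to^* )$-reduction of $G$ if $G\to^*H$ and, for pairings $H'$ with $H'_i\subseteq H_i$, $H\to H'$ holds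 only for $H'=H$. A correspondence $F:G_i\to2^{G_i}$ is $L_S$-majorized ($S$ the identity) if for each $x\in G_i$ there exist an open neighbourhood $N(x)$ of $x$ in $G_i$ and a correspondence with convex values $B_x:G_i\to 2^{G_i}$ such that $F(z)\subseteq B_x(z)$ for each $z\in N(x)$, $y\notin B_x(y)$ for each $y\in G_i$, and $B_x^{-1}(y)=\{z\in G_i: y\in B_x(z)\}$ is open in $G_i$ for each $y\in G_i$. *)

(* Defs.v *)
From HB Require Import structures.
From mathcomp Require Import all_boot all_order all_algebra.
From mathcomp Require Import all_classical all_reals all_analysis.
Set Implicit Arguments. Unset Strict Implicit. Unset Printing Implicit Defensive.
Import Order.TTheory GRing.Theory Num.Theory.
Local Open Scope classical_set_scope.
Local Open Scope ring_scope.

Section QualGame.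
Variables (R : realType) (I : Type) (E : I -> tvsType R).

Definition profile := forall j, E j.

(* (y_i, x_{-i}) : replace the i-th coordinate of x by y *)
Definition upd (x : profile) (i : I) (y : E i) : profile :=
  fun j => match pselect (i = j) with
           | left e => eq_rect i E y j e
           | right _ => x j
           end.

(* x_{-i} \in H_{-i} (the i-th coordinate of x is a dummy) *)
Definition in_minus (H : forall j, set (E j)) (i : I) (x : profile) :=
  forall j, j <> i -> H j (x j).

Definition in_prod (H : forall j, set (E j)) (x : profile) := forall j, H j (x j).

Definition propertyT (G : forall j, set (E j)) (P Q : forall i, profile -> set (E i)) :=
  forall i x, in_prod G x ->
    P i x `<=` Q i x /\
    (forall y, P i x y -> Q i (upd x y) `<=` P i x).

Definition pairing (G H : forall j, set (E j)) := forall i, H i `<=` G i.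

Definition nonempty_pairing (H : forall j, set (E j)) := forall i, H i !=set0.

Definition succH (P : forall i, profile -> set (E i)) (H : forall j, set (E j))
    (i : I) (y x : E i) :=
  (exists z : profile, in_minus H i z) /\
  (forall z : profile, in_minus H i z -> P i (upd z x) y).

Definition bigcap_nonempty (G : forall j, set (E j))
    (P : forall i, profile -> set (E i)) (Rr : forall j, set (E j)) (i : I) (x : E i) :=
  exists y, G i y /\ forall z : profile, in_minus Rr i z -> P i (upd z x) y.

Definition reduces G P (Rr S : forall j, set (E j)) :=
  (forall i, S i `<=` Rr i) /\
  (forall i x, Rr i x -> ~ S i x -> bigcap_nonempty G P Rr x).

Definition reduces_fast G P (Rr S : forall j, set (E j)) :=
  reduces G P Rr S /\
  (forall i x, Rr i x -> bigcap_nonempty G P Rr x -> ~ S i x).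

(* index set of a finite (len = Some n : R^0..R^n) or countably infinite
   (len = None) sequence *)
Definition in_seq (len : option nat) (t : nat) : Prop :=
  match len with None => True | Some n => (t <= n)%N end.

Definition reduces_star G P (H : forall j, set (E j)) :=
  exists (len : option nat) (Rs : nat -> forall j, set (E j)),
    Rs 0%N = G /\
    (forall t, in_seq len t.+1 -> reduces_fast G P (Rs t) (Rs t.+1)) /\
    (forall i, H i = [set y | forall t, in_seq len t -> Rs t i y]).

Definition maximal_reduction G P (H : forall j, set (E j)) :=
  pairing G H /\ reduces_star G P H /\
  (forall H' : forall j, set (E j), pairing G H' -> (forall i, H' i `<=` H i) ->
     reduces G P H H' -> H' = H).

End QualGame.

(* L_S-majorized with S the identity, on the domain D (with the subspace
   topology of D inside the tvs M) *)
Definition LS_majorized (R : realType) (M : tvsType R) (D : set M)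
    (F : M -> set M) :=
  forall x, D x ->
    exists (U : set M) (B : M -> set M),
      open U /\ U x /\
      (forall z, D z -> B z `<=` D /\ convex_set (B z : set (convex_lmodType M))) /\
      (forall z, D z -> U z -> F z `<=` B z) /\
      (forall y, D y -> ~ B y y) /\
      (forall y, D y -> exists V : set M, open V /\
          [set z | D z /\ B z y] = V `&` D).

(* Main.v *)
Require Import Defs.
From HB Require Import structures.
From mathcomp Require Import all_boot all_order all_algebra.
From mathcomp Require Import all_classical all_reals all_analysis.
Local Open Scope classical_set_scope.
Local Open Scope ring_scope.
Set Implicit Arguments. Unset Strict Implicit.

Lemma upd_upd (R : realType) (I : Type) (E : I -> tvsType R)
  (z : profile E) (i : I) (a b : E i) : upd (upd z a) b = upd z b.
Proof.
apply: functional_extensionality_dep => j; rewrite /upd.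
by case: pselect => // ne; case: pselect.
Qed.

Lemma upd_in_prod (R : realType) (I : Type) (E : I -> tvsType R)
  (G : forall i, set (E i)) (i : I) (z : profile E) (a : E i) :
  in_minus G i z -> G i a -> in_prod G (upd z a).
Proof.
move=> hz ha j; rewrite /upd; case: pselect => [e|ne].
  by case: j / e.
by apply: hz => e; apply: ne.
Qed.

Lemma in_seq_pred len t : in_seq len t.+1 -> in_seq len t.
Proof. by case: len => //= n h; apply: ltnW. Qed.

Lemma nodom (R : realType) (I : Type) (E : I -> tvsType R)
  (G : forall i, set (E i)) (P : forall i, profile E -> set (E i))
  (M : forall j, set (E j)) :
  maximal_reduction G P M -> forall i x, M i x -> ~ bigcap_nonempty G P M x.
Proof.
move=> [pM [_ mx]] i x Mx.
pose H' := fun j => [set y : E j | M j y /\ ~ bigcap_nonempty G P M y].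
have e : H' = M.
  apply: mx.
  - by move=> j y [/pM].
  - by move=> j y [].
  split; first by move=> j y [].
  move=> j y My nH; apply: contrapT => nb; apply: nH; by split.
by rewrite -e in Mx; case: Mx.
Qed.

Lemma bc_mono (R : realType) (I : Type) (E : I -> tvsType R)
  (G : forall i, set (E i)) (P : forall i, profile E -> set (E i))
  (Rr S : forall j, set (E j)) i (x : E i) :
  (forall j, S j `<=` Rr j) ->
  bigcap_nonempty G P Rr x -> bigcap_nonempty G P S x.
Proof.
move=> sub [y [Gy hy]]; exists y; split => // z hz; apply: hy => j nj.
exact/sub/hz.
Qed.

Lemma incl_max (R : realType) (I : Type) (E : I -> tvsType R)
  (G : forall i, set (E i)) (P : forall i, profile E -> set (E i))
  (M M' : forall j, set (E j)) :
  reduces_star G P M -> maximal_reduction G P M' -> forall j, M' j `<=` M j.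
Proof.
move=> [len [Rs [R0 [hf hM]]]] mM' j y M'y.
have key : forall t, in_seq len t -> forall j, M' j `<=` Rs t j.
  elim=> [|t IH] ht k w Mw.
    by rewrite R0; case: mM' => pM _; apply: pM.
  have Rw := IH (@in_seq_pred len t ht) k w Mw.
  have [[_ red] _] := hf t ht.
  apply: contrapT => nw.
  have bc := red k w Rw nw.
  have sub : forall l, M' l `<=` Rs t l by move=> l; exact: IH (@in_seq_pred len t ht) l.
  exact: (nodom mM' Mw (bc_mono sub bc)).
by rewrite hM => t ht; apply: key.
Qed.

Lemma Ptrans (R : realType) (I : Type) (E : I -> tvsType R)
  (G : forall i, set (E i)) (P Q : forall i, profile E -> set (E i))
  i (z : profile E) (a b c : E i) :
  propertyT G P Q -> in_minus G i z -> G i a -> G i b ->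
  P i (upd z a) b -> Q i (upd z b) c -> P i (upd z a) c.
Proof.
move=> hT hz Ga Gb Pab Qc.
have [_ h] := hT i (upd z a) (upd_in_prod hz Ga).
by have := h b Pab; rewrite upd_upd; apply.
Qed.

Lemma Pirr (R : realType) (I : Type) (E : I -> tvsType R)
  (G : forall i, set (E i)) (P : forall i, profile E -> set (E i))
  i (z : profile E) (a : E i) :
  (forall i x, in_minus G i x -> LS_majorized (G i) (fun z => P i (upd x z))) ->
  in_minus G i z -> G i a -> ~ P i (upd z a) a.
Proof.
move=> hLS hz Ga Paa.
have [U [B [_ [Ua [_ [FB [nB _]]]]]]] := hLS i z hz a Ga.
exact: (nB a Ga (FB a Ga Ua a Paa)).
Qed.

Lemma minusGH (R : realType) (I : Type) (E : I -> tvsType R)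
  (G H : forall i, set (E i)) i (z : profile E) :
  pairing G H -> in_minus H i z -> in_minus G i z.
Proof. by move=> pH hz j nj; apply/pH/hz. Qed.

Lemma succ_trans (R : realType) (I : Type) (E : I -> tvsType R)
  (G : forall i, set (E i)) (P Q : forall i, profile E -> set (E i))
  (H : forall i, set (E i)) i (a b c : E i) :
  pairing G H -> propertyT G P Q -> G i a -> G i b ->
  succH P H b a -> succH P H c b -> succH P H c a.
Proof.
move=> pH hT Ga Gb [ex hab] [_ hbc]; split => // z hz.
have hzG := minusGH pH hz.
apply: (Ptrans hT hzG Ga Gb (hab z hz)).
have [PQ _] := hT i (upd z b) (upd_in_prod hzG Gb).
exact/PQ/hbc.
Qed.

Lemma succ_irr (R : realType) (I : Type) (E : I -> tvsType R)
  (G : forall i, set (E i)) (P : forall i, profile E -> set (E i))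
  (H : forall i, set (E i)) i (a : E i) :
  pairing G H ->
  (forall i x, in_minus G i x -> LS_majorized (G i) (fun z => P i (upd x z))) ->
  G i a -> ~ succH P H a a.
Proof.
move=> pH hLS Ga [[z hz] h].
exact: (Pirr hLS (minusGH pH hz) Ga (h z hz)).
Qed.

Lemma H_member (R : realType) (I : Type) (E : I -> tvsType R)
  (G : forall i, set (E i)) (P : forall i, profile E -> set (E i))
  (H : forall i, set (E i)) i (x : E i) :
  reduces_star G P H -> (exists z, in_minus H i z) -> G i x ->
  (forall y, G i y -> ~ succH P H y x) -> H i x.
Proof.
move=> [len [Rs [R0 [hf hH]]]] ex Gx nd.
have key : forall t, in_seq len t -> Rs t i x.
  elim=> [|t IH] ht; first by rewrite R0.
  have Rx := IH (@in_seq_pred len t ht).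
  have [[_ red] _] := hf t ht.
  apply: contrapT => nx.
  have [y [Gy hy]] := red i x Rx nx.
  apply: (nd y Gy); split => // z hz; apply: hy => j nj.
  by have := hz j nj; rewrite hH => /(_ t (@in_seq_pred len t ht)).
by rewrite hH => t ht; apply: key.
Qed.

Lemma exist_max (R : realType) (I : Type) (E : I -> tvsType R)
  (G : forall i, set (E i)) (P Q : forall i, profile E -> set (E i))
  (H : forall i, set (E i)) i (xi yi : E i) :
  pairing G H -> propertyT G P Q ->
  (forall i (x : profile E) (y : E i), in_minus G i x -> G i y -> Q i (upd x y) y) ->
  (forall i x, in_prod G x ->
     convex_set (Q i x : set (convex_lmodType (E i))) /\ closed (Q i x)) ->
  (forall i x, in_minus G i x -> LS_majorized (G i) (fun z => P i (upd x z))) ->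
  compact (G i) ->
  G i xi -> G i yi -> succH P H yi xi ->
  exists xs, G i xs /\ succH P H xs xi /\ (forall zi, G i zi -> ~ succH P H zi xs).
Proof.
move=> pH hT hi hii hLS cG Gxi Gyi syx.
pose S0 := fun a => G i a /\ succH P H a xi.
pose T := {a : E i | S0 a}.
pose Rl := fun s t : T => `[< s = t \/ succH P H (sval t) (sval s) >].
have RlP : forall s t, Rl s t <-> (s = t \/ succH P H (sval t) (sval s)).
  by move=> s t; split => /asboolP.
have GT : forall s : T, G i (sval s) by move=> s; case: (proj2_sig s).
have [t tmax] : exists t, forall s, Rl t s -> s = t.
  apply: Zorn.
  - by move=> s; apply/RlP; left.
  - move=> r s t /RlP [e1|hrs] /RlP [e2|hst]; apply/RlP.
    + by left; rewrite e1.
    + by right; rewrite e1.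
    + by right; rewrite -e2.
    by right; apply: (succ_trans pH hT (GT r) (GT s) hrs hst).
  - move=> s t /RlP [//|hst] /RlP [e|hts]; first by rewrite e.
    by case: (succ_irr pH hLS (GT s) (succ_trans pH hT (GT s) (GT t) hst hts)).
  move=> A tA.
  case: (pselect (exists s, A s)) => [[s0 As0]|nA]; last first.
    by exists (exist _ yi (conj Gyi syx)) => s As; case: nA; exists s.
  case: (pselect (exists m, A m /\ forall s, A s -> Rl s m)) => [[m [_ hm]]|nm].
    by exists m.
  have nm' : forall m, A m -> exists s, A s /\ ~ Rl s m.
    move=> m Am; apply: contrapT => h; apply: nm; exists m; split => // s As.
    by apply: contrapT => nR; apply: h; exists s.
  pose Tw := fun w : E i => \bigcap_(z in in_minus H i) Q i (upd z w).
  pose D := [set w | exists s : T, A s /\ sval s = w].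
  pose f := fun w => G i `&` Tw w.
  have DG : forall w, D w -> G i w by move=> w [s [_ <-]].
  have Dtot : forall w1 w2, D w1 -> D w2 ->
      (w1 = w2 \/ succH P H w2 w1) \/ (w2 = w1 \/ succH P H w1 w2).
    move=> w1 w2 [s1 [As1 <-]] [s2 [As2 <-]].
    case: (tA s1 s2 As1 As2) => /RlP [->|h]; by [left; left|left; right|right; left|right; right].
  have fin : forall s : seq (E i), (forall w, w \in s -> D w) -> s != [::] ->
      exists m, m \in s /\ forall w, w \in s -> w = m \/ succH P H m w.
    elim=> [//|a s IH] sD _.
    have Da : D a by apply: sD; rewrite inE eqxx.
    case: (eqVneq s [::]) => [->|sn].
      by exists a; split; [rewrite inE eqxx|move=> w; rewrite inE => /eqP ->; left].
    have [m' [m's hm']] := IH (fun w ws => sD w (mem_behead (s:=a :: s) ws)) sn.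
    have Dm' : D m' by apply: sD; rewrite inE m's orbT.
    case: (Dtot a m' Da Dm') => [ham'|hm'a].
      exists m'; split; first by rewrite inE m's orbT.
      by move=> w; rewrite inE => /orP[/eqP ->//|/hm'].
    exists a; split; first by rewrite inE eqxx.
    move=> w; rewrite inE => /orP[/eqP ->|ws]; first by left.
    have Dw : D w by apply: sD; rewrite inE ws orbT.
    case: (hm' w ws) => [->|hwm]; first by case: hm'a => [->|h]; [left|right].
    right; case: hm'a => [<-//|h].
    exact: (succ_trans pH hT (DG w Dw) (DG m' Dm') hwm h).
  have clf : closed_fam_of (G i) D f.
    exists Tw => // w Dw; apply: closed_bigI => z hz.
    exact: (hii i _ (upd_in_prod (minusGH pH hz) (DG w Dw))).2.
  have finf : finI D f.
    move=> D' sD'.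
    have sD : forall w, w \in (finmap.enum_fset D') -> D w.
      by move=> w wD; have := sD' w wD; rewrite in_setE.
    case: (eqVneq (finmap.enum_fset D') [::]) => [e|ne].
      exists yi => w /= wD.
      by have : w \in finmap.enum_fset D' := wD; rewrite e.
    have [m [mD hm]] := fin _ sD ne.
    have Dm := sD m mD.
    exists m => w /= wD0; have wD : w \in finmap.enum_fset D' := wD0.
    split; first exact: DG.
    move=> z hz /=.
    have hzG := minusGH pH hz.
    case: (hm w wD) => [->|hmw]; first exact: (hi i z m hzG (DG m Dm)).
    have Dw := sD w wD.
    have [PQ _] := hT i (upd z w) (upd_in_prod hzG (DG w Dw)).
    by apply: PQ; case: hmw => _; apply.
  have [v hv] : \bigcap_(w in D) f w !=set0.
    have Dw0 : D (sval s0) by exists s0.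
    have [|p [Gp clp]] := cG _ (finI_filter finf).
      by exists (f (sval s0)); [apply: finI_from1|move=> ? []].
    exists p => j Dj; split => //.
    have clT : closed (Tw j).
      apply: closed_bigI => z hz.
      exact: (hii i _ (upd_in_prod (minusGH pH hz) (DG j Dj))).2.
    apply: clT => B nB.
    have [q [[_ Tq] Bq]] : f j `&` B !=set0.
      by apply: clp nB; exists (f j); [apply: finI_from1|].
    by exists q.
  have claim : forall s, A s -> succH P H v (sval s).
    move=> s As; have [s' [As' nR]] := nm' s As.
    have ss' : succH P H (sval s') (sval s).
      case: (tA s s' As As') => /RlP [e|h] //.
      by case: nR; apply/RlP; left; rewrite e.
    have Ds' : D (sval s') by exists s'.
    have [_ Tv] := hv _ Ds'.
    case: ss' => ex hss'; split => // z hz.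
    exact: (Ptrans hT (minusGH pH hz) (GT s) (GT s') (hss' z hz) (Tv z hz)).
  have Dw0 : D (sval s0) by exists s0.
  have [Gv _] := hv _ Dw0.
  have vS0 : succH P H v xi.
    exact: (succ_trans pH hT Gxi (GT s0) (proj2_sig s0).2 (claim s0 As0)).
  by exists (exist _ v (conj Gv vS0)) => s As; apply/RlP; right; exact: claim.
exists (sval t); split; first exact: GT.
split; first exact: (proj2_sig t).2.
move=> zi Gzi hz.
have szi : succH P H zi xi := succ_trans pH hT Gxi (GT t) (proj2_sig t).2 hz.
pose sz : T := exist _ zi (conj Gzi szi).
have e : sz = t by apply: tmax; apply/RlP; right.
have e' : zi = sval t by rewrite -e.
by apply: (succ_irr pH hLS (GT t)); rewrite -{1}e'.
Qed.

Unset Implicit Arguments. Set Strict Implicit.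

Theorem theorem8 (R : realType) (I : Type) (E : I -> tvsType R)
    (G : forall i, set (E i))
    (P Q : forall i, profile E -> set (E i)) :
  (exists i : I, True) ->
  (forall i, hausdorff_space (E i)) ->
  (forall i, compact (G i)) ->
  (forall i, convex_set (G i : set (convex_lmodType (E i)))) ->
  (forall i x, in_prod G x -> P i x `<=` G i /\ Q i x `<=` G i) ->
  propertyT G P Q ->
  (* (i) *)
  (forall i (x : profile E) (y : E i), in_minus G i x -> G i y -> Q i (upd x y) y) ->
  (* (ii) *)
  (forall i x, in_prod G x ->
     convex_set (Q i x : set (convex_lmodType (E i))) /\ closed (Q i x)) ->
  (* (iii) *)
  (forall i x, in_minus G i x -> LS_majorized (G i) (fun z => P i (upd x z))) ->
  (* (a) *)
  (forall H, pairing G H -> reduces_star G P H ->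
     forall i (xi yi : E i), G i xi -> G i yi -> succH P H yi xi ->
     exists xs, H i xs /\ succH P H xs xi /\
       (forall zi, G i zi -> ~ succH P H zi xs)) /\
  (* (b) *)
  (forall M, nonempty_pairing M -> maximal_reduction G P M ->
     forall M', maximal_reduction G P M' -> M' = M).
Proof.
move=> _ _ cG _ _ hT hi hii hLS; split.
  move=> H pH rs i xi yi Gxi Gyi syx.
  have [xs [Gxs [sx nd]]] := exist_max pH hT hi hii hLS (cG i) Gxi Gyi syx.
  exists xs; split => //.
  exact: (H_member rs (proj1 sx) Gxs nd).
move=> M _ mM M' mM'.
apply: functional_extensionality_dep => j; apply/seteqP; split.
  exact: (incl_max (proj1 (proj2 mM)) mM').
exact: (incl_max (proj1 (proj2 mM')) mM).
Qed.
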